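(* Let $G=PSO(8,\mathbb{C})$ and $P_2$ the maximal parabolic subgroup defined in the context. For $u,v\in W^{P_2}$, in $(H^*(G/P_2),\odot_0)$ one has: $\epsilon^{P_2}_u\odot_0\epsilon^{P_2}_v=\epsilon^{P_2}_u\cdot\epsilon^{P_2}_v$ if $\ell(u)+\ell(v)\le 4$; $\epsilon^{P_2}_u\odot_0\epsilon^{P_2}_v=\epsilon^{P_2}_u\cdot\epsilon^{P_2}_v$ if $\ell(u)+\ell(v)\ge5$ and at least one of $\ell(u),\ell(v)$ is $\ge5$; and $\epsilon^{P_2}_u\odot_0\epsilon^{P_2}_v=0$ if $\ell(u)+\ell(v)\ge 5$ and both $\ell(u)\le4$ and $\ell(v)\le 4$.
   Context: $G=PSO(8,\mathbb{C})$ with Borel $B$, maximal torus $T$, Weyl group $W$ of type $D_4$ with length function $\ell$. In standard coordinates $\epsilon_1,\dots,\epsilon_4$ on the Cartan subalgebra, the simple roots are $\alpha_1=\epsilon_1-\epsilon_2$, $\alpha_2=\epsilon_2-\epsilon_3$, $\alpha_3=\epsilon_3-\epsilon_4$, $\alpha_4=\epsilon_3+\epsilon_4$ with simple reflections $s_1,\dots,s_4$; $\rho$ is half the sum of positive roots. $P_2\supset B$ is the maximal parabolic with $W_{P_2}$ generated by $s_1,s_3,s_4$; $W^{P_2}$ is the set of minimal length representatives of $W/W_{P_2}$; $x_{P_2}$ is the element of the Cartan subalgebra with $\alpha_j(x_{P_2})=\delta_{j2}$. For $w\in W^{P_2}$, $\epsilon^{P_2}_w\in H^{2\ell(w)}(G/P_2,\mathbb{Z})$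 is the class dual (under the Kronecker pairing) to the Schubert basis $\{[\overline{BwP_2/P_2}]\}$ of homology. Writing the cup product as $\epsilon_u\cdot\epsilon_v=\sum_w d^w_{u,v}\epsilon_w$, the Belkale–Kumar product is $\epsilon_u\odot_0\epsilon_v=\sum_w d^w_{u,v}\delta^w_{u,v}\epsilon_w$, with $\delta^w_{u,v}=1$ if $(u^{-1}\rho+v^{-1}\rho-w^{-1}\rho-\rho)(x_{P_2})=0$ and $\delta^w_{u,v}=0$ otherwise. *)

(* Defs.v *)
From HB Require Import structures.
From mathcomp Require Import all_boot all_order all_algebra all_fingroup.
From mathcomp Require Import mpoly.
From Stdlib Require Import ClassicalEpsilon.

Set Implicit Arguments.
Unset Strict Implicit.
Unset Printing Implicit Defensive.

Import GRing.Theory Num.Theory.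
Local Open Scope ring_scope.

(* h^* has basis eps_0..eps_3 (= eps_1..eps_4 of the paper); h is identified *)
(* with rat^4 via the dual basis, the pairing being the dot product.         *)
(* The Weyl group W is realised as the group of permutations of the 8       *)
(* vectors +-eps_i generated by the simple reflections: index k < 4 stands  *)
(* for eps_k and index k >= 4 for -eps_(k-4).                                *)

Definition D4vec (k : 'I_8) : 'rV[rat]_4 :=
  if (k < 4)%N then \row_j (if (j : nat) == k then 1 else 0)
  else \row_j (if (j : nat) == (k - 4)%N then -1 else 0).

Definition eps (i : 'I_4) : 'rV[rat]_4 := \row_j (if j == i then 1 else 0).

(* linear action of the perm w on h^*: eps_i |-> D4vec (w^-1 i)  so that  *)
(* D4act (w * x) = D4act w \o D4act x  (a left action).                   *)
Definition D4act (w : {perm 'I_8}) (x : 'rV[rat]_4) : 'rV[rat]_4 :=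
  \sum_(i < 4) x ord0 i *: D4vec ((w^-1)%g (widen_ord (isT : (4 <= 8)%N) i)).

Definition i8 (k : nat) : 'I_8 := inord k.

Definition s1 : {perm 'I_8} := (tperm (i8 0) (i8 1) * tperm (i8 4) (i8 5))%g. (* eps1-eps2 *)
Definition s2 : {perm 'I_8} := (tperm (i8 1) (i8 2) * tperm (i8 5) (i8 6))%g. (* eps2-eps3 *)
Definition s3 : {perm 'I_8} := (tperm (i8 2) (i8 3) * tperm (i8 6) (i8 7))%g. (* eps3-eps4 *)
Definition s4 : {perm 'I_8} := (tperm (i8 2) (i8 7) * tperm (i8 3) (i8 6))%g. (* eps3+eps4 *)

Definition sref (i : 'I_4) : {perm 'I_8} :=
  match (i : nat) with 0 => s1 | 1 => s2 | 2 => s3 | _ => s4 end.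

(* simple roots alpha_1..alpha_4 (indexed 0..3) *)
Definition alpha (i : 'I_4) : 'rV[rat]_4 :=
  match (i : nat) with
  | 0 => eps (inord 0) - eps (inord 1)
  | 1 => eps (inord 1) - eps (inord 2)
  | 2 => eps (inord 2) - eps (inord 3)
  | _ => eps (inord 2) + eps (inord 3)
  end.

Definition W : {group {perm 'I_8}} := <<[set s1; s2; s3; s4]>>%G.
Definition WP2 : {group {perm 'I_8}} := <<[set s1; s3; s4]>>%G.

Definition posroots : seq 'rV[rat]_4 :=
  let prs := [seq ij : 'I_4 * 'I_4 <- [seq (i, j) | i <- enum 'I_4, j <- enum 'I_4]
               | (ij.1 < ij.2)%N] in
  [seq eps ij.1 - eps ij.2 | ij <- prs] ++ [seq eps ij.1 + eps ij.2 | ij <- prs].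

Definition len (w : {perm 'I_8}) : nat :=
  count (fun b => - D4act w b \in posroots) posroots.

Definition WPmin : {set {perm 'I_8}} :=
  [set w in W | [forall x in WP2, (len w <= len (w * x)%g)%N]].

Definition rho : 'rV[rat]_4 := \row_j ((3 - (j : nat))%:R).
(* x_{P_2} in h : alpha_j(x_{P_2}) = delta_{j2};  x_{P_2} = (1,1,0,0) *)
Definition xP2 : 'rV[rat]_4 := \row_j (if ((j : nat) < 2)%N then 1 else 0).
Definition pair (a x : 'rV[rat]_4) : rat := \sum_(j < 4) a ord0 j * x ord0 j.

Definition BKdelta (u v w : {perm 'I_8}) : bool :=
  pair (D4act u^-1 rho + D4act v^-1 rho - D4act w^-1 rho - rho) xP2 == 0.

(* Cohomology: Borel presentation H^*(G/B,Q) = S(h^* )/(W-invariants of     *)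
(* positive degree), S(h^* ) = Q[X_0..X_3] (X_i = eps_i), with Schubert     *)
(* classes given by Bernstein-Gelfand-Gelfand divided differences.          *)
(* H^*(G/P_2) embeds in H^*(G/B) with eps^{P_2}_w |-> eps^B_w (w in W^P).   *)

Definition Spoly := {mpoly rat[4]}.

Definition linpoly (a : 'rV[rat]_4) : Spoly := \sum_(j < 4) a ord0 j *: 'X_j.

Definition polyact (w : {perm 'I_8}) (f : Spoly) : Spoly :=
  comp_mpoly [tuple linpoly (D4act w (eps j)) | j < 4] f.

Definition ddiff (i : 'I_4) (f : Spoly) : Spoly :=
  epsilon (inhabits 0)
    (fun g : Spoly => linpoly (alpha i) * g = f - polyact (sref i) f).

Definition ddword (t : seq 'I_4) (f : Spoly) : Spoly := foldr ddiff f t.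

Definition wordprod (t : seq 'I_4) : {perm 'I_8} := (\prod_(i <- t) sref i)%g.

Definition ddW (w : {perm 'I_8}) (f : Spoly) : Spoly :=
  match [pick t : (len w).-tuple 'I_4 | wordprod t == w] with
  | Some t => ddword t f
  | None => 0
  end.

Definition w0 : {perm 'I_8} := [arg max_(w > 1%g in W) len w].

Definition ptclass : Spoly :=
  (#|W|%:R)^-1 *: \prod_(b <- posroots) linpoly b.

Definition schub (w : {perm 'I_8}) : Spoly := ddW (w^-1 * w0)%g ptclass.

(* cup-product structure constants: eps_u . eps_v = sum_w d^w_{u,v} eps_w. *)
(* For a polynomial f of degree l(w), the coefficient of eps_w in f is the *)
(* constant d_w f; d^w_{u,v} = 0 unless l(w) = l(u)+l(v) (grading).        *)
Definition cupcoef (u v w : {perm 'I_8}) : rat :=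
  if len w == (len u + len v)%N then (ddW w (schub u * schub v))@_0%MM else 0.

(* elements of H^*(G/P_2) as coefficient vectors on the Schubert basis *)
Definition cup (u v : {perm 'I_8}) : {ffun {perm 'I_8} -> rat} :=
  [ffun w => if w \in WPmin then cupcoef u v w else 0].

Definition BKprod (u v : {perm 'I_8}) : {ffun {perm 'I_8} -> rat} :=
  [ffun w => if w \in WPmin then cupcoef u v w * (BKdelta u v w)%:R else 0].

Definition zeroclass : {ffun {perm 'I_8} -> rat} := [ffun => 0].

(* Main.v *)
Require Import Defs.
From mathcomp Require Import all_boot all_algebra all_fingroup.
From mathcomp Require Import ring.
Set Implicit Arguments.
Unset Strict Implicit.
Unset Printing Implicit Defensive.
Import GRing.Theory.
Local Open Scope ring_scope.
Definition cw (w : {perm 'I_8}) : seq nat := [seq val (w (i8 k)) | k <- iota 0 8].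

Lemma i8K k : (k < 8)%N -> val (i8 k) = k.
Proof. by move=> h; exact: inordK. Qed.

Lemma cw_nth w k : (k < 8)%N -> nth 0%N (cw w) k = val (w (i8 k)).
Proof. by move=> h; rewrite /cw (nth_map 0%N) ?size_iota // nth_iota. Qed.

Lemma cw_inj x y : cw x = cw y -> x = y.
Proof.
move=> h; apply/permP => i; apply: val_inj.
have -> : i = i8 i by rewrite /i8 inord_val.
by rewrite -!cw_nth ?h.
Qed.

Definition compC (c d : seq nat) : seq nat := [seq nth 0%N d k | k <- c].

Lemma cwM x y : cw (x * y)%g = compC (cw x) (cw y).
Proof.
rewrite /compC /cw -map_comp; apply: eq_map => k /=.
by rewrite permM cw_nth // /i8 inord_val.
Qed.

Lemma cw1 : cw 1%g = iota 0 8.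
Proof.
rewrite /cw -[RHS]map_id; apply/eq_in_map => k.
by rewrite mem_iota /= => hk; rewrite perm1 i8K.
Qed.

Definition tpC (a b : nat) : seq nat :=
  [seq if k == a then b else if k == b then a else k | k <- iota 0 8].

Lemma cw_tperm a b : (a < 8)%N -> (b < 8)%N -> cw (tperm (i8 a) (i8 b)) = tpC a b.
Proof.
move=> ha hb; rewrite /cw /tpC; apply/eq_in_map => k; rewrite mem_iota /= => hk.
case: tpermP => [/(congr1 val)|/(congr1 val)|].
- by rewrite !i8K // => ->; rewrite eqxx.
- rewrite !i8K // => ->; rewrite eqxx; by case: eqP.
- move=> h1 h2; rewrite i8K //.
  case: eqP => [e|_]; first by case: h1; apply: val_inj; rewrite !i8K.
  case: eqP => [e|_] //; by case: h2; apply: val_inj; rewrite !i8K.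
Qed.

Definition cs1 := compC (tpC 0 1) (tpC 4 5).
Definition cs2 := compC (tpC 1 2) (tpC 5 6).
Definition cs3 := compC (tpC 2 3) (tpC 6 7).
Definition cs4 := compC (tpC 2 7) (tpC 3 6).

Lemma cws1 : cw s1 = cs1. Proof. by rewrite /s1 cwM !cw_tperm. Qed.
Lemma cws2 : cw s2 = cs2. Proof. by rewrite /s2 cwM !cw_tperm. Qed.
Lemma cws3 : cw s3 = cs3. Proof. by rewrite /s3 cwM !cw_tperm. Qed.
Lemma cws4 : cw s4 = cs4. Proof. by rewrite /s4 cwM !cw_tperm. Qed.

Lemma invol s c : cw s = c -> compC c c = iota 0 8 -> (s^-1 = s)%g.
Proof.
move=> hs hc; apply/eqP; rewrite eq_invg_mul; apply/eqP; apply: cw_inj.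
by rewrite cwM hs hc cw1.
Qed.

Lemma s1V : (s1^-1 = s1)%g. Proof. by apply: (invol cws1); vm_compute. Qed.
Lemma s2V : (s2^-1 = s2)%g. Proof. by apply: (invol cws2); vm_compute. Qed.
Lemma s3V : (s3^-1 = s3)%g. Proof. by apply: (invol cws3); vm_compute. Qed.
Lemma s4V : (s4^-1 = s4)%g. Proof. by apply: (invol cws4); vm_compute. Qed.

Definition gensC := [:: cs1; cs2; cs3; cs4].
Definition stepC (L : seq (seq nat * seq nat)) :=
  undup (L ++ [seq (compC p.1 s, compC s p.2) | p <- L, s <- gensC]).
Definition LW := iter 14 stepC [:: (iota 0 8, iota 0 8)].

Lemma LW_closed : all (fun p => all (fun s => (compC p.1 s, compC s p.2) \in LW) gensC) LW.
Proof. by vm_compute. Qed.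
Lemma LW_1 : (iota 0 8, iota 0 8) \in LW.
Proof. by vm_compute. Qed.
Local Opaque LW.
Lemma inW w : w \in W -> (cw w, cw w^-1%g) \in LW.
Proof.
case/gen_prodgP => n [c Hc ->]; elim: n c Hc => [|n IH] c Hc.
  by rewrite big_ord0 invg1 cw1 LW_1.
rewrite big_ord_recr /=.
have := IH (fun i => c (widen_ord (leqnSn n) i)) (fun i => Hc _).
set x := (\prod_(i < n) _)%g => hx.
have := Hc ord_max; set s := c ord_max.
rewrite invMg !cwM.
have hall := allP LW_closed _ hx.
rewrite ?in_setU ?in_setU1 ?in_set1.
rewrite ?in_setU ?in_setU1 ?in_set1.
case/orP => [/orP [/orP [] | ] | ] /eqP ->.
- by rewrite s1V cws1; move: (allP hall cs1 isT) => /= ->.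
- by rewrite s2V cws2; move: (allP hall cs2 isT) => /= ->.
- by rewrite s3V cws3; move: (allP hall cs3 isT) => /= ->.
- by rewrite s4V cws4; move: (allP hall cs4 isT) => /= ->.
Qed.
Definition i4 (k : nat) : 'I_4 := inord k.
Lemma i4K k : (k < 4)%N -> val (i4 k) = k.
Proof. by move=> h; exact: inordK. Qed.

Definition rl (r : 'rV[rat]_4) : seq rat := [seq r ord0 (i4 k) | k <- iota 0 4].

Lemma nth_rl r k : (k < 4)%N -> nth 0 (rl r) k = r ord0 (i4 k).
Proof. by move=> h; rewrite /rl (nth_map 0%N) ?size_iota // nth_iota. Qed.

Lemma rl_inj : injective rl.
Proof.
move=> x y h; apply/rowP => i.
have -> : i = i4 i by rewrite /i4 inord_val.
by rewrite -!nth_rl ?h.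
Qed.

Lemma rlE (r : 'rV[rat]_4) (f : nat -> rat) : (forall j : 'I_4, r ord0 j = f j) -> rl r = map f (iota 0 4).
Proof.
move=> h; rewrite /rl; apply/eq_in_map => k; rewrite mem_iota /= => hk.
by rewrite h i4K.
Qed.

Lemma sum4 (F : 'I_4 -> rat) : \sum_(i < 4) F i = F (i4 0) + F (i4 1) + F (i4 2) + F (i4 3).
Proof.
rewrite !big_ord_recr big_ord0 /= GRing.add0r.
by congr (_ + _ + _ + _); congr F; apply: val_inj; rewrite /= i4K.
Qed.

Definition gC (k j : nat) : rat :=
  if (k < 4)%N then (if j == k then 1 else 0) else (if j == (k - 4)%N then -1 else 0).

Definition actC (c : seq nat) (xs : seq rat) : seq rat :=
  [seq nth 0 xs 0 * gC (nth 0%N c 0) j + nth 0 xs 1 * gC (nth 0%N c 1) j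
     + nth 0 xs 2 * gC (nth 0%N c 2) j + nth 0 xs 3 * gC (nth 0%N c 3) j | j <- iota 0 4].

Lemma D4vecE k (j : 'I_4) : D4vec k ord0 j = gC k j.
Proof. by rewrite /D4vec /gC; case: ifP => _; rewrite mxE. Qed.

Lemma widen_i4 k : (k < 4)%N -> widen_ord (isT : (4 <= 8)%N) (i4 k) = i8 k.
Proof. by move=> h; apply: val_inj; rewrite /= i4K // i8K // (ltn_trans h). Qed.

Lemma rl_D4act w x : rl (D4act w x) = actC (cw w^-1%g) (rl x).
Proof.
rewrite /actC; apply: rlE => j.
rewrite /D4act summxE sum4 !mxE !D4vecE !widen_i4 // !nth_rl // !cw_nth //.
Qed.

Lemma rlN r : rl (- r) = map -%R (rl r).
Proof. by rewrite /rl -map_comp; apply: eq_map => k; rewrite /= mxE. Qed.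

Definition prsN := [:: (0,1);(0,2);(0,3);(1,2);(1,3);(2,3)]%N.

Lemma enum4 : enum 'I_4 = [:: i4 0; i4 1; i4 2; i4 3].
Proof. by apply: (inj_map val_inj); rewrite val_enum_ord /= !i4K. Qed.

Lemma prs_val : [seq (val ij.1, val ij.2) | ij <- [seq ij : 'I_4 * 'I_4 <- [seq (i, j) | i <- enum 'I_4, j <- enum 'I_4]
               | (ij.1 < ij.2)%N]] = prsN.
Proof.
have -> : [seq ij : 'I_4 * 'I_4 <- [seq (i, j) | i <- enum 'I_4, j <- enum 'I_4] | (ij.1 < ij.2)%N]
  = filter (preim (fun ij : 'I_4 * 'I_4 => (val ij.1, val ij.2)) (fun p : nat * nat => (p.1 < p.2)%N))
      [seq (i, j) | i <- enum 'I_4, j <- enum 'I_4] by [].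
rewrite -filter_map map_allpairs.
have -> : [seq (val x, val y) | x <- enum 'I_4, y <- enum 'I_4]
   = [seq (a, b) | a <- map val (enum 'I_4), b <- map val (enum 'I_4)].
  by rewrite allpairs_mapl allpairs_mapr.
by rewrite val_enum_ord.
Qed.

Lemma prs_eq : [seq ij : 'I_4 * 'I_4 <- [seq (i, j) | i <- enum 'I_4, j <- enum 'I_4]
               | (ij.1 < ij.2)%N] = [seq (i4 p.1, i4 p.2) | p <- prsN].
Proof.
rewrite -prs_val; elim: (filter _ _) => //= -[i j] t <-.
by rewrite /i4 !inord_val.
Qed.

Definition PRL : seq (seq rat) :=
  [seq [seq (if k == p.1 then 1 else 0) - (if k == p.2 then 1 else 0) | k <- iota 0 4] | p <- prsN]
  ++ [seq [seq (if k == p.1 then 1 else 0) + (if k == p.2 then 1 else 0) | k <- iota 0 4] | p <- prsN].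

Lemma PRL_eq : map rl posroots = PRL.
Proof.
have hb : all (fun p => (p.1 < 4) && (p.2 < 4))%N prsN by [].
rewrite /posroots prs_eq map_cat -!map_comp /PRL.
congr (_ ++ _); apply/eq_in_map => p /(allP hb) /andP [h1 h2].
- apply: (rlE (f := fun k => (if k == p.1 then 1 else 0) - (if k == p.2 then 1 else 0))) => j.
  by rewrite !mxE -!(inj_eq val_inj) /= !i4K.
- apply: (rlE (f := fun k => (if k == p.1 then 1 else 0) + (if k == p.2 then 1 else 0))) => j.
  by rewrite !mxE -!(inj_eq val_inj) /= !i4K.
Qed.

Definition lenC (c : seq nat) : nat := count (fun xs => map -%R (actC c xs) \in PRL) PRL.

Lemma lenE w : len w = lenC (cw w^-1%g).
Proof.
rewrite /lenC -PRL_eq count_map /len; apply: eq_count => b.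
change ((- D4act w b \in posroots) = (map -%R (actC (cw w^-1%g) (rl b)) \in map rl posroots)).
rewrite -rl_D4act -rlN mem_map //; exact: rl_inj.
Qed.
Local Opaque LW.
Definition rhoL : seq rat := [seq (3 - k)%:R | k <- iota 0 4].
Lemma rl_rho : rl rho = rhoL.
Proof. by apply: rlE => j; rewrite mxE. Qed.

Definition gval (c : seq nat) : rat := nth 0 (actC c rhoL) 0 + nth 0 (actC c rhoL) 1.

Lemma pairx a : pair a xP2 = a ord0 (i4 0) + a ord0 (i4 1).
Proof.
rewrite /pair sum4 !mxE !i4K //= !GRing.mulr1 !GRing.mulr0 !GRing.addr0 //.
Qed.

Lemma deltaE u v w : BKdelta u v w = (gval (cw u) + gval (cw v) - gval (cw w) - 5 == 0).
Proof.
rewrite /BKdelta pairx !mxE -!nth_rl // !rl_D4act !invgK rl_rho /gval.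
rewrite !i4K //.
have -> : (3 - 0)%:R = 3 :> rat by [].
have -> : (3 - 1)%:R = 2 :> rat by [].
move: (nth 0 (actC (cw u) rhoL) 0) (nth 0 (actC (cw u) rhoL) 1) => a0 a1.
move: (nth 0 (actC (cw v) rhoL) 0) (nth 0 (actC (cw v) rhoL) 1) => b0 b1.
move: (nth 0 (actC (cw w) rhoL) 0) (nth 0 (actC (cw w) rhoL) 1) => c0 c1.
congr (_ == 0); ring.
Qed.

Definition minC (p : seq nat * seq nat) : bool :=
  [&& (lenC p.2 <= lenC (compC cs1 p.2))%N, (lenC p.2 <= lenC (compC cs3 p.2))%N
    & (lenC p.2 <= lenC (compC cs4 p.2))%N].

Lemma lenMs w s c : cw s = c -> (s^-1 = s)%g -> len (w * s)%g = lenC (compC c (cw w^-1%g)).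
Proof. by move=> hc hs; rewrite lenE invMg hs cwM hc. Qed.

Lemma minW w : w \in WPmin -> minC (cw w, cw w^-1%g).
Proof.
rewrite inE => /andP [_ /forall_inP hmin].
have h1 : s1 \in WP2 by apply: mem_gen; rewrite !in_setU !in_set1 eqxx ?orbT.
have h3 : s3 \in WP2 by apply: mem_gen; rewrite !in_setU !in_set1 eqxx ?orbT.
have h4 : s4 \in WP2 by apply: mem_gen; rewrite !in_setU !in_set1 eqxx ?orbT.
move: (hmin _ h1) (hmin _ h3) (hmin _ h4).
rewrite (lenMs _ cws1 s1V) (lenMs _ cws3 s3V) (lenMs _ cws4 s4V) lenE.
by move=> a b c; apply/and3P; split.
Qed.

Definition Mlist : seq (nat * rat) := [seq (lenC p.2, gval p.1) | p <- LW & minC p].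

Lemma inM w : w \in WPmin -> (len w, gval (cw w)) \in Mlist.
Proof.
move=> hw; have hW : w \in W by move: hw; rewrite inE => /andP [].
rewrite lenE.
rewrite /Mlist.
apply/mapP.
exists (cw w, cw w^-1%g).
rewrite mem_filter.
apply/andP.
split.
exact: minW.
exact: inW.
reflexivity.
Qed.

Definition okC' (la : nat) (ga : rat) (lb : nat) (gb : rat) (lc : nat) (gc : rat) : bool :=
  (lc == la + lb)%N ==>
  [&& ((la + lb <= 4)%N ==> (ga + gb - gc - 5 == 0)),
      (((5 <= la) || (5 <= lb))%N ==> (ga + gb - gc - 5 == 0))
    & (((5 <= la + lb) && (la <= 4) && (lb <= 4))%N ==> ~~ (ga + gb - gc - 5 == 0))].

Definition okC (a b c : nat * rat) : bool := okC' a.1 a.2 b.1 b.2 c.1 c.2.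

Local Transparent LW.
Lemma checkAll : all (fun a => all (fun b => all (okC a b) Mlist) Mlist) Mlist.
Proof. vm_compute. reflexivity. Qed.
Local Opaque LW.

Lemma okW u v w : u \in WPmin -> v \in WPmin -> w \in WPmin ->
  okC' (len u) (gval (cw u)) (len v) (gval (cw v)) (len w) (gval (cw w)).
Proof.
move=> hu hv hw.
exact: (allP (allP (allP checkAll _ (inM hu)) _ (inM hv)) _ (inM hw)).
Qed.

Theorem corollary4p1 (u v : {perm 'I_8}) :
  u \in WPmin -> v \in WPmin ->
  [/\ (len u + len v <= 4)%N -> BKprod u v = cup u v,
      (5 <= len u + len v)%N -> (5 <= len u \/ 5 <= len v)%N ->
        BKprod u v = cup u v
    & (5 <= len u + len v)%N -> (len u <= 4)%N -> (len v <= 4)%N ->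
        BKprod u v = zeroclass].
Proof.
move=> hu hv.
have key w : w \in WPmin -> len w = (len u + len v)%N ->
  [&& ((len u + len v <= 4)%N ==> BKdelta u v w),
      (((5 <= len u) || (5 <= len v))%N ==> BKdelta u v w)
    & (((5 <= len u + len v) && (len u <= 4) && (len v <= 4))%N ==> ~~ BKdelta u v w)].
  move=> hw hl; move: (okW hu hv hw); rewrite /okC' hl eqxx implyTb -!deltaE.
  by [].
split.
- move=> h; apply/ffunP => w; rewrite !ffunE; case: ifP => hw //.
  rewrite /cupcoef; case: eqP => hl; last by rewrite GRing.mul0r.
  case/and3P: (key w hw hl) => /implyP /(_ h) -> _ _.
  by rewrite GRing.mulr1.
- move=> _ h; apply/ffunP => w; rewrite !ffunE; case: ifP => hw //.
  rewrite /cupcoef; case: eqP => hl; last by rewrite GRing.mul0r.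
  case/and3P: (key w hw hl) => _ /implyP H2 _.
  have hd : BKdelta u v w by apply: H2; apply/orP.
  by rewrite hd GRing.mulr1.
- move=> h h1 h2; apply/ffunP => w; rewrite !ffunE; case: ifP => hw //.
  rewrite /cupcoef; case: eqP => hl; last by rewrite GRing.mul0r.
  case/and3P: (key w hw hl) => _ _ /implyP H.
  by rewrite (negbTE (H _)) ?GRing.mulr0 // h h1 h2.
Qed.
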